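(* Let $\mathbb{F}\subseteq\mathbb{C}$ be a subfield closed under complex conjugation, $m\ge2$, $N\ge1$, and let $\zeta_1,\dots,\zeta_{m-1}\in\mathcal{P}_N^-[\mathbb{F}]$. Let $\mathbf{u}(z)=(u_1(z),\dots,u_{m-1}(z),\widetilde{u_m}(z))^T$ and $\mathbf{v}(z)=(v_1(z),\dots,v_{m-1}(z),\widetilde{v_m}(z))^T$, with all $u_i,v_i\in\mathcal{P}_N^+[\mathbb{F}]$, be two (possibly equal) solutions of the system $(\mathcal{S})$. Then $$\sum_{i=1}^{m-1}u_i(z)\widetilde{v_i}(z)+\widetilde{u_m}(z)v_m(z)$$ is constant on $\mathbb{C}\setminus\{0\}$.
   Context: For a Laurent polynomial $p(z)=\sum_k c_kz^k$ write $\widetilde{p}(z)=\sum_k\overline{c_k}z^{-k}$. $\mathcal{P}_N^+[\mathbb{F}]=\{\sum_{k=0}^Nc_kz^k: c_k\in\mathbb{F}\}$, $\mathcal{P}_N^-[\mathbb{F}]=\{\sum_{k=1}^Nc_kz^{-k}: c_k\in\mathbb{F}\}$. Let $\mathcal{P}^+$ denote the set of polynomials in $z$ (Laurent polynomials with no negative powers). The system $(\mathcal{S})$ in unknowns $x_1,\dots,x_m$ is $$\zeta_i(z)x_m(z)-\widetilde{x_i}(z)\in\mathcal{P}^+\ (i=1,\dots,m-1),\qquad \sum_{i=1}^{m-1}\zeta_i(z)x_i(z)+\widetilde{x_m}(z)\in\mathcal{P}^+.$$ A vector $(u_1,\dots,u_{m-1},\widetilde{u_m})^T$ with $u_i\in\mathcal{P}_N^+[\mathbb{F}]$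 is called a solution of $(\mathcal{S})$ if all these conditions hold with $x_i=u_i$, $i=1,\dots,m$. *)

(* Defs.v *)
From mathcomp Require Import all_boot all_algebra complex.
From mathcomp Require Import Rstruct.
Set Implicit Arguments. Unset Strict Implicit. Unset Printing Implicit Defensive.
Import GRing.Theory Num.Theory.
Local Open Scope ring_scope.

Notation CC := (Rdefinitions.R[i]).

(* A Laurent polynomial is represented as a pair (p, s) standing for
   z^(-s) * p(z), with p a polynomial in z. *)
Record laurent := Laurent { lnum : {poly CC}; lshift : nat }.

Definition lcoef (L : laurent) (k : int) : CC :=
  match (k + (lshift L)%:Z)%R with
  | Posz j => (lnum L)`_j
  | Negz _ => 0
  end.

(* value at z (meaningful for z <> 0) *)
Definition leval (L : laurent) (z : CC) : CC := (lnum L).[z] / z ^+ lshift L.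

Definition lpoly (p : {poly CC}) : laurent := Laurent p 0.
Definition lzero : laurent := lpoly 0.
Definition ladd (L M : laurent) : laurent :=
  Laurent (lnum L * 'X^(lshift M) + lnum M * 'X^(lshift L)) (lshift L + lshift M).
Definition lopp (L : laurent) : laurent := Laurent (- lnum L) (lshift L).
Definition lsub (L M : laurent) : laurent := ladd L (lopp M).
Definition lmul (L M : laurent) : laurent :=
  Laurent (lnum L * lnum M) (lshift L + lshift M).

(* tilde: sum_k c_k z^k  |->  sum_k conj(c_k) z^(-k) *)
Definition ltilde (L : laurent) : laurent :=
  let n := size (lnum L) in
  Laurent (\sum_(k < n) ((lnum L)`_k)^* *: 'X^(lshift L + (n - k))) n.

Definition inPplus (L : laurent) : Prop := forall k : nat, lcoef L (Negz k) = 0.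

Definition inPplusN (N : nat) (F : {pred CC}) (p : {poly CC}) : Prop :=
  (size p <= N.+1)%N /\ forall k : nat, p`_k \in F.

Definition inPminusN (N : nat) (F : {pred CC}) (L : laurent) : Prop :=
  (forall k : int, lcoef L k != 0 -> (- (N%:Z) <= k <= -1)%R)
  /\ forall k : int, lcoef L k \in F.

(* (u_1,...,u_{m-1}, ~u_m) is a solution of (S); u : 'I_(m-1) -> poly gives
   u_1..u_{m-1} and um gives u_m. *)
Definition is_solution (m N : nat) (F : {pred CC}) (zeta : 'I_(m - 1) -> laurent)
    (u : 'I_(m - 1) -> {poly CC}) (um : {poly CC}) : Prop :=
  [/\ forall i, inPplusN N F (u i),
      inPplusN N F um,
      forall i, inPplus (lsub (lmul (zeta i) (lpoly um)) (ltilde (lpoly (u i))))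
    & inPplus (ladd (\big[ladd/lzero]_(i < m - 1) lmul (zeta i) (lpoly (u i)))
                    (ltilde (lpoly um)))].

(* Main.v *)
Require Import Defs.
From mathcomp Require Import all_boot all_algebra complex.
From mathcomp Require Import Rstruct.
From mathcomp Require Import zify ring.
Import GRing.Theory Num.Theory.
Local Open Scope ring_scope.

Lemma inPplus_poly L : inPplus L -> forall z : CC, z != 0 ->
  leval L z = (drop_poly (Defs.lshift L) (lnum L)).[z].
Proof.
case: L => p s /= H z z0.
have Ht : take_poly s p = 0.
  apply/polyP => i; rewrite coef_take_poly coef0.
  case: ifP => // lis.
  have := H (s - i.+1)%N; rewrite /lcoef /=.
  have -> : (Negz (s - i.+1) + Posz s = Posz i)%R.
    rewrite NegzE; lia.
  by [].
rewrite /leval /=.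
have {1}-> : p = take_poly s p + drop_poly s p * 'X^s by rewrite poly_take_drop.
rewrite Ht add0r hornerM hornerXn mulfK // expf_neq0 //.
Qed.

Lemma leval_ladd L M z : z != 0 -> leval (ladd L M) z = leval L z + leval M z.
Proof.
move=> z0; rewrite /leval /= hornerD !hornerM !hornerXn exprD.
field; rewrite ?expf_neq0 //.
Qed.

Lemma leval_lmul L M z : z != 0 -> leval (lmul L M) z = leval L z * leval M z.
Proof.
move=> z0; rewrite /leval /= hornerM exprD.
field; rewrite ?expf_neq0 //.
Qed.

Lemma leval_lopp L z : leval (lopp L) z = - leval L z.
Proof. by rewrite /leval /= hornerN mulNr. Qed.

Lemma leval_lsub L M z : z != 0 -> leval (lsub L M) z = leval L z - leval M z.
Proof. by move=> z0; rewrite /lsub leval_ladd // leval_lopp. Qed.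

Lemma leval_lpoly p z : leval (lpoly p) z = p.[z].
Proof. by rewrite /leval /= expr0 divr1. Qed.

Lemma leval_lzero z : leval lzero z = 0.
Proof. by rewrite leval_lpoly horner0. Qed.

Lemma leval_ltilde p z : z != 0 ->
  leval (ltilde (lpoly p)) z = (map_poly Num.Def.conjC p).[z^-1].
Proof.
move=> z0; rewrite /leval /= horner_sum (horner_coef _ z^-1) size_map_poly.
rewrite mulr_suml; apply: eq_bigr => i _.
rewrite hornerZ hornerXn coef_map /= add0n.
rewrite expfB // exprVn; field; rewrite ?expf_neq0 //.
Qed.

Lemma poly_eq_nz (p q : {poly CC}) :
  (forall z : CC, z != 0 -> p.[z] = q.[z]) -> p = q.
Proof.
move=> H; apply/eqP; rewrite -subr_eq0; apply/negP => /negP nz.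
have := max_poly_roots (rs := [seq (i.+1)%:R | i <- iota 0 (size (p - q))]) nz.
rewrite size_map size_iota ltnn => Hc.
suff : false by []. apply: Hc.
  apply/allP => x /mapP [i _ ->].
  by rewrite /root hornerD hornerN H ?subrr // pnatr_eq0.
rewrite map_inj_uniq ?iota_uniq // => i j /eqP; rewrite eqr_nat => /eqP [] //.
Qed.

Lemma const_poly (P Q : {poly CC}) :
  (forall z : CC, z != 0 -> P.[z] = Q.[z^-1]) -> P = (P`_0)%:P.
Proof.
move=> H; apply: size1_polyC.
set d := size Q.
pose R : {poly CC} := \sum_(k < d) Q`_k *: 'X^(d - k).
have E : 'X^d * P = R.
  apply: poly_eq_nz => z z0.
  rewrite hornerM hornerXn H // (horner_coef _ z^-1) mulr_sumr /R horner_sum.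
  apply: eq_bigr => i _; rewrite hornerZ hornerXn expfB // exprVn.
  by rewrite mulrCA.
apply/leq_sizeP => j j1.
have := congr1 (fun r : {poly CC} => r`_(j + d)) E.
rewrite /= coefXnM ltnNge leq_addl /= addnK => ->.
rewrite /R coef_sum big1 // => i _.
rewrite coefZ coefXn.
case: eqP; last by rewrite mulr0.
move=> e; exfalso; move: e; lia.
Qed.

Lemma key {n} (a tv ze cc : 'I_n -> CC) (vm b tum : CC) :
  (forall i, tv i = ze i * vm - cc i) -> tum = b - \sum_i ze i * a i ->
  \sum_i a i * tv i + tum * vm = b * vm - \sum_i a i * cc i.
Proof.
move=> h1 ->.
rewrite (eq_bigr (fun i => ze i * a i * vm - a i * cc i)); last first.
  by move=> i _; rewrite h1 mulrBr mulrCA mulrA.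
rewrite sumrB mulrBl mulr_suml.
ring.
Qed.

Lemma inPplus_ex L : inPplus L -> exists q : {poly CC}, forall z : CC, z != 0 ->
  leval L z = q.[z].
Proof. by move=> H; eexists; apply: inPplus_poly. Qed.

Local Notation cj := Num.Def.conjC.
Definition tl (p : {poly CC}) (z : CC) := (map_poly cj p).[z^-1].

Lemma cj_tl p z : z != 0 -> cj (tl p (cj z)^-1) = p.[z].
Proof.
move=> z0; rewrite /tl invrK -horner_map /= -map_poly_comp.
rewrite (eq_map_poly (g := id)) ?map_poly_id ?conjCK // => x /=.
by rewrite conjCK.
Qed.

Lemma cj_horner p z : z != 0 -> cj p.[(cj z)^-1] = tl p z.
Proof.
move=> z0; rewrite /tl -horner_map /= fmorphV.
congr (_.[_^-1]); exact: conjCK.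
Qed.

Theorem lemma3 (F : {pred CC}) (m N : nat)
  (HF : GRing.divring_closed F)
  (HFconj : forall x : CC, x \in F -> x^* \in F)
  (Hm : (2 <= m)%N) (HN : (1 <= N)%N)
  (zeta : 'I_(m - 1) -> laurent)
  (Hzeta : forall i, inPminusN N F (zeta i))
  (u v : 'I_(m - 1) -> {poly CC}) (um vm : {poly CC})
  (Hu : is_solution N F zeta u um)
  (Hv : is_solution N F zeta v vm) :
  exists c : CC, forall z : CC, z != 0 ->
    leval (ladd (\big[ladd/lzero]_(i < m - 1) lmul (lpoly (u i)) (ltilde (lpoly (v i))))
                (lmul (ltilde (lpoly um)) (lpoly vm))) z = c.
Proof.
case: Hu => _ _ Hui Hum; case: Hv => _ _ Hvi Hvm.
have [A HA] := fin_all_exists (fun i => @inPplus_ex _ (Hui i)).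
have [B HB] := @inPplus_ex _ Hum.
have [C HC] := fin_all_exists (fun i => @inPplus_ex _ (Hvi i)).
have [D HD] := @inPplus_ex _ Hvm.
have bigE : forall z, z != 0 -> forall G : 'I_(m - 1) -> laurent,
    leval (\big[ladd/lzero]_(i < m - 1) G i) z = \sum_(i < m - 1) leval (G i) z.
  move=> z z0 G.
  exact: (big_morph (fun L => leval L z) (fun L M => @leval_ladd L M z z0) (leval_lzero z)).
have evS : forall z, z != 0 -> forall (w : 'I_(m-1) -> {poly CC}) wm,
    leval (ladd (\big[ladd/lzero]_(i < m - 1) lmul (zeta i) (lpoly (w i)))
      (ltilde (lpoly wm))) z = \sum_i leval (zeta i) z * (w i).[z] + tl wm z.
  move=> z z0 w wm; rewrite leval_ladd // leval_ltilde // bigE //.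
  by congr (_ + _); apply: eq_bigr => i _; rewrite leval_lmul // leval_lpoly.
have evI : forall z, z != 0 -> forall i (w : {poly CC}) wm,
    leval (lsub (lmul (zeta i) (lpoly wm)) (ltilde (lpoly w))) z
      = leval (zeta i) z * wm.[z] - tl w z.
  by move=> z z0 i w wm; rewrite leval_lsub // leval_lmul // leval_lpoly leval_ltilde.
pose W (u v : 'I_(m - 1) -> {poly CC}) (um vm : {poly CC}) z :=
  \sum_i (u i).[z] * tl (v i) z + tl um z * vm.[z].
have evW : forall z, z != 0 ->
    leval (ladd (\big[ladd/lzero]_(i < m - 1) lmul (lpoly (u i)) (ltilde (lpoly (v i))))
                (lmul (ltilde (lpoly um)) (lpoly vm))) z = W u v um vm z.
  move=> z z0; rewrite leval_ladd // bigE // leval_lmul // leval_lpoly leval_ltilde //.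
  by congr (_ + _); apply: eq_bigr => i _; rewrite leval_lmul // leval_lpoly leval_ltilde.
pose P1 := B * vm - \sum_i u i * C i.
pose P2 := D * um - \sum_i v i * A i.
have hP1 : forall z, z != 0 -> P1.[z] = W u v um vm z.
  move=> z z0.
  transitivity (B.[z] * vm.[z] - \sum_i (u i).[z] * (C i).[z]).
    rewrite /P1 hornerD hornerN horner_sum hornerM; congr (_ - _).
    by apply: eq_bigr => i _; rewrite hornerM.
  rewrite /W; symmetry; apply: (key (fun i => (u i).[z]) (fun i => tl (v i) z)
     (fun i => leval (zeta i) z) (fun i => (C i).[z]) vm.[z] B.[z] (tl um z)).
    by move=> i /=; rewrite -(HC i z z0) evI // opprB addrC subrK.
  by rewrite -(HB z z0) evS // addrC addKr.
have hP2 : forall z, z != 0 -> P2.[z] = W v u vm um z.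
  move=> z z0.
  transitivity (D.[z] * um.[z] - \sum_i (v i).[z] * (A i).[z]).
    rewrite /P2 hornerD hornerN horner_sum hornerM; congr (_ - _).
    by apply: eq_bigr => i _; rewrite hornerM.
  rewrite /W; symmetry; apply: (key (fun i => (v i).[z]) (fun i => tl (u i) z)
     (fun i => leval (zeta i) z) (fun i => (A i).[z]) um.[z] D.[z] (tl vm z)).
    by move=> i /=; rewrite -(HA i z z0) evI // opprB addrC subrK.
  by rewrite -(HD z z0) evS // addrC addKr.
have Wrel : forall z, z != 0 -> W u v um vm z = cj (W v u vm um (cj z)^-1).
  move=> z z0; rewrite /W rmorphD rmorph_sum; congr (_ + _).
    apply: eq_bigr => i _; rewrite rmorphM mulrC.
    by rewrite -[in LHS](cj_tl (u i) z z0) -[in LHS](cj_horner (v i) z z0).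
  by rewrite rmorphM mulrC -[in LHS](cj_tl vm z z0) -[in LHS](cj_horner um z z0).
have w0 : forall z : CC, z != 0 -> (cj z)^-1 != 0.
  by move=> z z0; rewrite invr_eq0 conjC_eq0.
have HP : P1 = (P1`_0)%:P.
  apply: (@const_poly P1 (map_poly cj P2)) => z z0.
  rewrite hP1 // Wrel // -hP2 ?w0 //.
  exact: cj_horner.
exists P1`_0 => z z0; by rewrite evW // -hP1 // {1}HP hornerC.
Qed.
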